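(* Let $\hat\Sigma=(\hat\sigma_{ij})$ be the thresholded matrix produced in step (2) of DP-Thresholding, with $\gamma$ the constant of the concentration hypothesis below. There is a constant $C>0$ (depending only on $\sigma^2$) such that for every fixed pair $1\le i,j\le p$, with probability at least $1-Cp^{-9/2}$, $$|\hat\sigma_{ij}-\sigma_{ij}|\le 4\min\Big\{|\sigma_{ij}|,\ \gamma\sqrt{\tfrac{\log p}{n}}+\tfrac{4\sqrt{2\ln(1.25/\delta)}\sqrt{\log p}}{n\epsilon}\Big\}.$$
   Context: Setting: $x_1,\dots,x_n$ are i.i.d. random vectors in $\mathbb{R}^p$ (high-dimensional regime $p\gg n\ge \mathrm{poly}(\log p)$) with $\mathbb{E}x_i=0$, $\|x_i\|_2\le 1$ almost surely, sub-Gaussian with parameter $\sigma^2$: $\mathbb{P}\{|v^Tx_i|>t\}\le e^{-t^2/(2\sigma^2)}$ for all $t>0$ and all unit vectors $v$. The covariance $\Sigma=(\sigma_{ij})$ lies in $\mathcal{G}_0(s)$: for each column $j$, the vector of off-diagonal entries $(\sigma_{ij})_{i\neq j}$ has at most $s$ nonzeros. $\Sigma^*=(\sigma^*_{ij})=\frac1n\sum_i x_ix_i^T$. The constant $\gamma>0$ (depending only on $\sigma^2$) is one for which there is a constant $C_1$ with $\mathbb{P}(|\sigma^*_{ij}-\sigma_{ij}|>t)\le C_1e^{-8nt^2/\gamma^2}$ for all $i,j$ and all sufficiently small $|t|$, in particular $\mathbb{P}(|\sigma^*_{ij}-\sigma_{ij}|>\gamma\sqrt{\log p/n})\le C_1p^{-8}$.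 DP-Thresholding algorithm with input $0<\epsilon,\delta\le1$: (1) $\tilde\Sigma=(\tilde\sigma_{ij})=\Sigma^*+N$, where $N$ is a symmetric $p\times p$ matrix whose upper-triangular entries (including the diagonal) are i.i.d. $\mathcal{N}(0,\sigma_1^2)$, independent of the data, with $\sigma_1^2=\frac{2\ln(1.25/\delta)}{n^2\epsilon^2}$, lower triangle copied from upper; (2) $\hat\sigma_{ij}=\tilde\sigma_{ij}\cdot\mathbb{I}[|\tilde\sigma_{ij}|>\tau]$ with $\tau=\gamma\sqrt{\frac{\log p}{n}}+\frac{4\sqrt{2\ln(1.25/\delta)}\sqrt{\log p}}{n\epsilon}$; (3) with eigendecomposition $\hat\Sigma=\sum_i\lambda_iv_iv_i^T$, output $\Sigma^+=\sum_i\max\{\lambda_i,0\}v_iv_i^T$. *)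

(* Defs.v *)
From HB Require Import structures.
From mathcomp Require Import all_boot all_order all_algebra.
From mathcomp Require Import all_classical all_reals all_analysis.
From mathcomp Require Import normal_distribution.
Set Implicit Arguments.
Unset Strict Implicit.
Unset Printing Implicit Defensive.
Import Order.TTheory GRing.Theory Num.Def Num.Theory.
Local Open Scope classical_set_scope.
Local Open Scope ring_scope.

Section DPThresholding.
Context {d : measure_display} {T : measurableType d} {R : realType}.
Variable P : probability T R.
Variables (n p : nat).

Definition vec_event (y : 'I_p -> T -> R) (B : 'I_p -> set R) : set T :=
  \big[setI/setT]_(k < p) (y k @^-1` B k).

Definition data_event (x : 'I_n -> 'I_p -> T -> R) (B : 'I_n -> 'I_p -> set R)
  : set T := \big[setI/setT]_(i < n) vec_event (x i) (B i).

(* x_1, ..., x_n are identically distributed random vectors in R^p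
   (equal joint laws, checked on the generating pi-system of rectangles) *)
Definition ident_distr_vectors (x : 'I_n -> 'I_p -> T -> R) : Prop :=
  forall (i i' : 'I_n) (B : 'I_p -> set R), (forall k, measurable (B k)) ->
    P (vec_event (x i) B) = P (vec_event (x i') B).

Definition indep_vectors (x : 'I_n -> 'I_p -> T -> R) : Prop :=
  forall B : 'I_n -> 'I_p -> set R, (forall i k, measurable (B i k)) ->
    P (data_event x B) = (\prod_(i < n) P (vec_event (x i) (B i)))%E.

(* the upper-triangular entries (incl. diagonal) of N are mutually independent
   and jointly independent of the data *)
Definition noise_indep (x : 'I_n -> 'I_p -> T -> R) (N : 'I_p -> 'I_p -> T -> R)
  : Prop :=
  forall (B : 'I_n -> 'I_p -> set R) (BN : 'I_p -> 'I_p -> set R),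
    (forall i k, measurable (B i k)) -> (forall k l, measurable (BN k l)) ->
    P (data_event x B `&`
       \big[setI/setT]_(k < p) \big[setI/setT]_(l < p | (k <= l)%N)
          (N k l @^-1` BN k l)) =
    (P (data_event x B) *
       \prod_(k < p) \prod_(l < p | (k <= l)%N) P (N k l @^-1` BN k l))%E.

Definition sample_cov (x : 'I_n -> 'I_p -> T -> R) (k l : 'I_p) (w : T) : R :=
  n%:R^-1 * \sum_(i < n) x i k w * x i l w.

End DPThresholding.

Definition dp_sigma1 {R : realType} (n : nat) (eps delta : R) : R :=
  Num.sqrt (2 * ln ((5 / 4) / delta)) / (n%:R * eps).

Definition dp_tau {R : realType} (n p : nat) (gamma eps delta : R) : R :=
  gamma * Num.sqrt (ln p%:R / n%:R)
  + 4 * Num.sqrt (2 * ln ((5 / 4) / delta)) * Num.sqrt (ln p%:R) / (n%:R * eps).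

Definition sigma_tilde {T : Type} {R : realType} (n p : nat)
  (x : 'I_n -> 'I_p -> T -> R) (N : 'I_p -> 'I_p -> T -> R) (k l : 'I_p) (w : T) : R :=
  n%:R^-1 * (\sum_(i < n) x i k w * x i l w) + N k l w.

Definition sigma_hat {T : Type} {R : realType} (n p : nat) (gamma eps delta : R)
  (x : 'I_n -> 'I_p -> T -> R) (N : 'I_p -> 'I_p -> T -> R) (k l : 'I_p) (w : T) : R :=
  let s := sigma_tilde x N k l w in
  if dp_tau n p gamma eps delta < `|s| then s else 0.

(* Main.v *)
Require Import Defs.
From HB Require Import structures.
From mathcomp Require Import all_boot all_order all_algebra.
From mathcomp Require Import all_classical all_reals all_analysis.
From mathcomp Require Import normal_distribution.
From mathcomp Require Import ring lra.
Import Order.TTheory GRing.Theory Num.Def Num.Theory.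
Local Open Scope classical_set_scope.
Local Open Scope ring_scope.
Lemma det_bound (R : realType) (st sg tau : R) : 0 <= tau ->
  `|st - sg| <= 3/4 * tau ->
  `|(if tau < `|st| then st else 0) - sg| <= 4 * Num.min `|sg| tau.
Proof.
move=> t0 h.
have hm : forall m, m <= 4 * `|sg| -> m <= 4 * tau -> m <= 4 * Num.min `|sg| tau.
  by move=> m h1 h2; rewrite /Order.min; case: ifP.
case: ifP => ht.
- have h1 : `|st| <= `|st - sg| + `|sg|.
    by rewrite -{1}(subrK sg st) ler_normD.
  apply: hm; lra.
- move/negbT: ht; rewrite -leNgt => ht.
  have h1 : `|sg| <= `|st - sg| + `|st|.
    have := ler_normD (sg - st) st; rewrite subrK distrC; lra.
  have := normr_ge0 sg; rewrite sub0r normrN; move=> ?; apply: hm; lra.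
Qed.
Lemma normal_pdf_pos (R : realType) (m s x : R) : s != 0 ->
  normal_pdf m s x = normal_peak s * expR (- (x - m) ^+ 2 / (s ^+ 2 *+ 2)).
Proof. by move=> s0; rewrite /normal_pdf (negbTE s0). Qed.

Lemma normal_shift_tail (R : realType) (s t : R) (A : set R) :
  0 < s -> measurable A ->
  (forall x, A x -> (- x ^+ 2 <= - t ^+ 2 - (x - t) ^+ 2)) ->
  (normal_prob 0 s A <= (expR (- t ^+ 2 / (s ^+ 2 *+ 2)))%:E)%E.
Proof.
move=> s0 mA hA.
have sn0 : s != 0 by rewrite gt_eqF.
rewrite /normal_prob.
apply: (@le_trans _ _ (\int[lebesgue_measure]_(x in A)
   ((expR (- t ^+ 2 / (s ^+ 2 *+ 2)))%:E * (normal_pdf t s x)%:E))%E).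
  apply: ge0_le_integral => //.
  - by move=> x _; rewrite lee_fin normal_pdf_ge0.
  - apply/measurable_realfun.measurable_EFinP; apply: measurable_funTS; exact: measurable_normal_pdf.
  - apply: emeasurable_funM; first exact: measurable_cst.
    apply/measurable_realfun.measurable_EFinP; apply: measurable_funTS; exact: measurable_normal_pdf.
  - move=> x Ax; rewrite -EFinM lee_fin !normal_pdf_pos // mulrCA.
    apply: ler_wpM2l; first exact: normal_peak_ge0.
    rewrite -expRD ler_expR subr0.
    have k0 : 0 < s ^+ 2 *+ 2 by rewrite pmulrn_lgt0 // exprn_gt0.
    rewrite -mulrDl ler_pM2r ?invr_gt0 //.
    have := hA x Ax; lra.
rewrite ge0_integralZl //.
- rewrite -[X in (_ <= X)%E]mule1; apply: lee_wpmul2l; first by rewrite lee_fin expR_ge0.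
  exact: (probability_le1 (normal_prob t s)).
all: try (by move=> x _; rewrite lee_fin normal_pdf_ge0).
all: try (by rewrite lee_fin expR_ge0).
apply/measurable_realfun.measurable_EFinP; apply: measurable_funTS; exact: measurable_normal_pdf.
Qed.

Lemma normal_tail2 (R : realType) (s t : R) : 0 < s -> 0 <= t ->
  (normal_prob 0 s [set x : R | (t < `|x|)%R] <= (2 * expR (- t ^+ 2 / (s ^+ 2 *+ 2)))%:E)%E.
Proof.
move=> s0 t0.
have -> : [set x : R | t < `|x|] = `]t, +oo[ `|` `]-oo, - t[.
  apply/seteqP; split => x /=.
    rewrite ltr_normr => /orP [h|h]; [left|right]; rewrite /= in_itv /= ?andbT //.
    by rewrite ltrNr.
  move=> [] /=; rewrite in_itv /= ?andbT => h; rewrite ltr_normr.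
    by rewrite h.
  by rewrite ltrNr h orbT.
apply: le_trans; first exact: measureU2.
rewrite mulr2n mulrDl mul1r EFinD; apply: leeD.
- apply: normal_shift_tail => // x; rewrite /= in_itv /= andbT => h; nra.
- rewrite -[t ^+ 2]sqrrN; apply: normal_shift_tail => // x.
  rewrite /= in_itv /= => h; nra.
Qed.
Lemma exp_conc (R : realType) (n gamma L : R) : 0 < n -> 0 < gamma -> 0 < L ->
  - (8 * n * (3/4 * (gamma * Num.sqrt (L / n))) ^+ 2) / gamma ^+ 2 = - (9/2) * L.
Proof.
move=> n0 g0 L0.
rewrite !exprMn sqr_sqrtr; last by rewrite divr_ge0 // ltW.
by field; rewrite !gt_eqF.
Qed.

Lemma exp_noise (R : realType) (s1 L : R) : 0 < s1 -> 0 < L ->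
  - (3 * (s1 * Num.sqrt L)) ^+ 2 / (s1 ^+ 2 *+ 2) = - (9/2) * L.
Proof.
move=> s0 L0.
rewrite !exprMn sqr_sqrtr ?ltW // -mulr_natr.
by field; rewrite !gt_eqF.
Qed.

Section Meas.
Context {d : measure_display} {T : measurableType d} {R : realType}.

Lemma meas_le (f g : T -> R) : measurable_fun setT f -> measurable_fun setT g ->
  measurable [set w | f w <= g w].
Proof.
move=> hf hg.
have h1 : measurable [set true] by [].
by move: (measurable_realfun.measurable_fun_ler hf hg measurableT h1); rewrite setTI.
Qed.

Lemma meas_lt (f g : T -> R) : measurable_fun setT f -> measurable_fun setT g ->
  measurable [set w | f w < g w].
Proof.
move=> hf hg.
have h1 : measurable [set true] by [].
by move: (measurable_realfun.measurable_fun_ltr hf hg measurableT h1); rewrite setTI.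
Qed.

Variables (n p : nat) (x : 'I_n -> 'I_p -> T -> R) (N : 'I_p -> 'I_p -> T -> R).
Hypothesis mx : forall i k, measurable_fun setT (x i k).
Hypothesis mN : forall k l, measurable_fun setT (N k l).

Lemma meas_sc k l : measurable_fun setT (fun w => sample_cov x k l w).
Proof.
rewrite /sample_cov.
apply: (measurable_realfun.measurable_funM (f := cst _)); first exact: measurable_cst.
apply: measurable_sum => i.
exact: (measurable_realfun.measurable_funM (mx i k) (mx i l)).
Qed.

Lemma meas_st k l : measurable_fun setT (fun w => sigma_tilde x N k l w).
Proof.
exact: (measurable_realfun.measurable_funD (meas_sc k l) (mN k l)).
Qed.

Lemma meas_sh (gamma eps delta : R) k l :
  measurable_fun setT (fun w => sigma_hat gamma eps delta x N k l w).
Proof.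
rewrite /sigma_hat /=.
apply: measurable_fun_ifT; last exact: measurable_cst.
  apply: measurable_realfun.measurable_fun_ltr; first exact: measurable_cst.
  apply: measurableT_comp; first exact: measurable_realfun.normr_measurable.
  exact: meas_st.
exact: meas_st.
Qed.

Lemma meas_absB (f : T -> R) c : measurable_fun setT f ->
  measurable_fun setT (fun w => `|f w - c|).
Proof.
move=> hf; apply: measurableT_comp; first exact: measurable_realfun.normr_measurable.
exact: (measurable_realfun.measurable_funD hf (measurable_cst _)).
Qed.

End Meas.

Theorem lemma3 (R : realType) (sigma2 gamma C1 t0 : R) :
  0 < sigma2 -> 0 < gamma -> 0 < t0 ->
  exists C : R, 0 < C /\
  forall (d : measure_display) (T : measurableType d) (P : probability T R)
    (n p s : nat)
    (x : 'I_n -> 'I_p -> {RV P >-> R}) (N : 'I_p -> 'I_p -> {RV P >-> R})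
    (Sigma : 'M[R]_p) (eps delta : R),
    (0 < n)%N ->
    0 < eps <= 1 -> 0 < delta <= 1 ->
    (* the x_i are i.i.d. *)
    ident_distr_vectors P (fun i k => x i k) ->
    indep_vectors P (fun i k => x i k) ->
    (* E x_i = 0 *)
    (forall i k, ('E_P[x i k] = 0)%E) ->
    (* ||x_i||_2 <= 1 almost surely *)
    (forall i, P [set w | \sum_(k < p) x i k w ^+ 2 <= 1] = 1%E) ->
    (* sub-Gaussian with parameter sigma2 *)
    (forall i (v : 'I_p -> R), \sum_(k < p) v k ^+ 2 = 1 -> forall t, 0 < t ->
       (P [set w | (t < `|\sum_(k < p) v k * x i k w|)%R]
          <= (expR (- t ^+ 2 / (2 * sigma2)))%:E)%E) ->
    (* Sigma is the covariance matrix *)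
    (forall i k l, ('E_P[fun w => (x i k w * x i l w)%R] = (Sigma k l)%:E)%E) ->
    (* Sigma in G_0(s) *)
    (forall j : 'I_p, (#|[pred i : 'I_p | (i != j) && (Sigma i j != 0%R)]| <= s)%N) ->
    (* concentration hypothesis for all sufficiently small t (0 < t <= t0) *)
    (forall (k l : 'I_p) (t : R), 0 < t <= t0 ->
       (P [set w | (t < `|sample_cov (fun i k => x i k) k l w - Sigma k l|)%R]
          <= (C1 * expR (- (8 * n%:R * t ^+ 2) / gamma ^+ 2))%:E)%E) ->
    (* regime n >= poly(log p): gamma sqrt(log p / n) is in the small-t range *)
    gamma * Num.sqrt (ln p%:R / n%:R) <= t0 ->
    (* the noise matrix N *)
    (forall k l w, N k l w = N l k w) ->
    (forall k l : 'I_p, (k <= l)%N -> forall A : set R, measurable A ->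
       distribution P (N k l) A = normal_prob 0 (dp_sigma1 n eps delta) A) ->
    noise_indep P (fun i k => x i k) (fun k l => N k l) ->
    forall i j : 'I_p,
      ((1 - C * p%:R `^ (- (9 / 2)))%:E <=
        P [set w | (`|sigma_hat gamma eps delta (fun i k => x i k)
                       (fun k l => N k l) i j w - Sigma i j|
                   <= 4 * Num.min `|Sigma i j| (dp_tau n p gamma eps delta))%R])%E.
Proof.
move=> hs2 hg ht0.
exists (`|C1| + 3); split; first by have := normr_ge0 C1; lra.
move=> d T P n p s x N Sigma eps delta n0 /andP[e0 e1] /andP[d0 d1]
  _ _ _ _ _ _ _ hconc ha Nsym Ndist _ i j.
set E := [set w | _].
have mx : forall i k, measurable_fun setT (x i k) by move=> *; exact: measurable_funPT.
have mN : forall k l, measurable_fun setT (N k l) by move=> *; exact: measurable_funPT.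
have mE : measurable E.
  apply: meas_le; last exact: measurable_cst.
  by apply: meas_absB; apply: meas_sh.
have p1 : (1 < p)%N \/ p = 1%N.
  by case: p i j {E mE hconc ha Nsym Ndist x N Sigma mx mN} => [[]//|[|p]] _ _; [right|left].
case: p1 => [p1|p1]; last first.
  subst p; rewrite powR1 mulr1.
  apply: (@le_trans _ _ 0%E); last exact: measure_ge0.
  by rewrite lee_fin; have := normr_ge0 C1; lra.
have pR : 1 < p%:R :> R by rewrite ltr1n.
have hL : 0 < ln p%:R :> R by exact: ln_gt0.
have nR : 0 < n%:R :> R by rewrite ltr0n.
have hs1 : 0 < dp_sigma1 n eps delta.
  rewrite /dp_sigma1 divr_gt0 ?mulr_gt0 // sqrtr_gt0 mulr_gt0 // ln_gt0 //.
  by rewrite ltr_pdivlMr // mul1r; lra.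
have htau : dp_tau n p gamma eps delta =
   gamma * Num.sqrt (ln p%:R / n%:R) + 4 * (dp_sigma1 n eps delta * Num.sqrt (ln p%:R)).
  by rewrite /dp_tau /dp_sigma1; field; rewrite !gt_eqF.
set L := ln p%:R in hL htau *.
set a := gamma * Num.sqrt (L / n%:R) in ha htau *.
set s1 := dp_sigma1 n eps delta in hs1 Ndist htau *.
set b := s1 * Num.sqrt L in htau *.
have ha0 : 0 < a by rewrite mulr_gt0 // sqrtr_gt0 divr_gt0.
have hb0 : 0 < b by rewrite mulr_gt0 // sqrtr_gt0.
set q := expR (- (9 / 2) * L).
have hq : 0 <= q by exact: expR_ge0.
set B1 := [set w | 3 / 4 * a < `|sample_cov (fun i k => x i k) i j w - Sigma i j|].
set B2 := [set w | 3 * b < `|N i j w|].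
have hB1 : (P B1 <= (C1 * q)%:E)%E.
  have := hconc i j (3/4 * a); rewrite /B1.
  have -> : - (8 * n%:R * (3/4 * a) ^+ 2) / gamma ^+ 2 = - (9 / 2) * L.
    exact: exp_conc.
  by apply; apply/andP; split; lra.
have hB2gen : forall k l : 'I_p, (k <= l)%N ->
    (P [set w | (3 * b < `|N k l w|)%R] <= (2 * q)%:E)%E.
  move=> k l hkl.
  have -> : P [set w | (3 * b < `|N k l w|)%R] =
     distribution P (N k l) [set y : R | 3 * b < `|y|] by [].
  rewrite Ndist //; last first.
    apply: meas_lt; [exact: measurable_cst | exact: measurable_realfun.normr_measurable].
  apply: le_trans; first (apply: normal_tail2 => //; lra).
  rewrite lee_fin /q.
  have -> : - (3 * b) ^+ 2 / (s1 ^+ 2 *+ 2) = - (9 / 2) * L.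
    exact: exp_noise.
  by [].
have hB2 : (P B2 <= (2 * q)%:E)%E.
  case: (leqP i j) => hij; first exact: hB2gen.
  have -> : B2 = [set w | 3 * b < `|N j i w|].
    by apply/seteqP; split => w /=; rewrite Nsym.
  exact: hB2gen (ltnW hij).
have mB1 : measurable B1.
  apply: meas_lt; first exact: measurable_cst.
  by apply: meas_absB; apply: meas_sc.
have mB2 : measurable B2.
  apply: meas_lt; first exact: measurable_cst.
  apply: measurableT_comp; first exact: measurable_realfun.normr_measurable.
  exact: mN.
have hsub : ~` E `<=` B1 `|` B2.
  move=> w /= hnE.
  have [h1|h1] := leP (`|sample_cov (fun i k => x i k) i j w - Sigma i j|) (3/4*a); last by left.
  have [h2|h2] := leP (`|N i j w|) (3*b); last by right.
  exfalso; apply: hnE.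
  rewrite /sigma_hat /=; apply: det_bound; first by rewrite htau; lra.
  have -> : sigma_tilde (fun i k => x i k) (fun k l => N k l) i j w - Sigma i j
     = (sample_cov (fun i k => x i k) i j w - Sigma i j) + N i j w.
    by rewrite /sigma_tilde /sample_cov addrAC.
  apply: le_trans (ler_normD _ _) _; rewrite htau; lra.
have hC : (P (~` E) <= ((C1 + 2) * q)%:E)%E.
  apply: (le_trans (le_measure _ _ _ hsub)).
  - by rewrite inE; exact: measurableC.
  - by rewrite inE; exact: measurableU.
  apply: (le_trans (measureU2 _ _ _)) => //.
  rewrite mulrDl EFinD; exact: leeD.
have -> : P E = (1 - P (~` E))%E.
  by rewrite -probability_setC ?setCK //; exact: measurableC.
have -> : p%:R `^ (- (9 / 2)) = q.
  by rewrite /powR gt_eqF // ltr0n (ltnW p1).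
move: hC (measure_ge0 P (~` E)); case: (P (~` E)) => [r||] //=; rewrite ?lee_fin => h1 h2.
- have := ler_norm C1; nra.
- by rewrite addey ?leey.
Qed.
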